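(* Let $\sigma_X>0$, $R_c\ge0$, $P\ge0$. Then $\underline D'(0,R_c,P|\mathcal N(\mu_X,\sigma_X^2))=\sigma_X^2+(\sigma_X-\sqrt P)_+^2$, and for $R>0$, $$\underline D'(R,R_c,P|\mathcal N(\mu_X,\sigma_X^2))=\begin{cases}\sigma_X^2e^{-2R}&\text{if }\frac{\sqrt P}{\sigma_X}\ge(1-\sqrt{1-e^{-2R}})\vee e^{-(R+R_c)},\\[2pt] \sigma_X^2+(\sigma_X-\sqrt P)^2-2\sigma_X(\sigma_X-\sqrt P)\sqrt{1-e^{-2R}}&\text{if }\frac{\sqrt P}{\sigma_X}\in[e^{-(R+R_c)},1-\sqrt{1-e^{-2R}}),\\[2pt] \sigma_X^2e^{-2R}+(\sigma_Xe^{-(R+R_c)}-\sqrt P)^2&\text{if }\frac{\sqrt P}{\sigma_X}\in[\nu(R,R_c),e^{-(R+R_c)}),\\[2pt] \sigma_X^2+(\sigma_X-\sqrt P)^2-2\sigma_X^2\sqrt{1-e^{-2R}}\sqrt{(1-e^{-(R+R_c)})\big(1+e^{-(R+R_c)}-\tfrac{2\sqrt P}{\sigma_X}\big)}&\text{if }\frac{\sqrt P}{\sigma_X}<\nu(R,R_c)\wedge e^{-(R+R_c)},\end{cases}$$ where $\nu(R,R_c):=\frac{e^{-2R}-e^{-2(R+R_c)}}{2-2e^{-(R+R_c)}}$. Moreover, the intervals $[e^{-(R+R_c)},1-\sqrt{1-e^{-2R}})$ and $[\nu(R,R_c),e^{-(R+R_c)})$ are never both non-empty.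
   Context: All logarithms are natural; $(a)_+:=\max\{a,0\}$, $a\vee b:=\max\{a,b\}$, $a\wedge b:=\min\{a,b\}$. For $R,R_c\ge0$, $P\ge 0$, $$\underline D'(R,R_c,P|\mathcal N(\mu_X,\sigma_X^2)):=\min_{\sigma_{\hat X}\in[(\sigma_X-\sqrt P)_+,\sigma_X]}\Big(\sigma_X^2+\sigma_{\hat X}^2-2\sigma_X\sqrt{(1-e^{-2R})\big(\sigma_{\hat X}^2-((\sigma_Xe^{-(R+R_c)}-\sqrt P)_+)^2\big)}\Big).$$ *)

(* Defs.v *)
From Stdlib Require Import Reals.
Open Scope R_scope.

Definition pos_part (a : R) : R := Rmax a 0.

Definition IsMinOn (f : R -> R) (a b m : R) : Prop :=
  (exists s, a <= s <= b /\ f s = m) /\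
  (forall s, a <= s <= b -> m <= f s).

(* The objective inside the min defining underline D'(R,Rc,P | N(muX, sX^2)),
   as a function of sigma_hatX. muX does not enter the formula. *)
Definition Dobj (muX sX Rr Rc P : R) (sXh : R) : R :=
  sX ^ 2 + sXh ^ 2
  - 2 * sX * sqrt ((1 - exp (-2 * Rr)) *
                   (sXh ^ 2 - (pos_part (sX * exp (- (Rr + Rc)) - sqrt P)) ^ 2)).

Definition Dlo (sX P : R) : R := pos_part (sX - sqrt P).
Definition Dhi (sX : R) : R := sX.

Definition DlowEq (muX sX Rr Rc P m : R) : Prop :=
  IsMinOn (Dobj muX sX Rr Rc P) (Dlo sX P) (Dhi sX) m.

Definition nu (Rr Rc : R) : R :=
  (exp (-2 * Rr) - exp (-2 * (Rr + Rc))) / (2 - 2 * exp (- (Rr + Rc))).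

(* Main.v *)
Require Import Defs.
From Stdlib Require Import Reals Lra Psatz.
Open Scope R_scope.

Lemma coreA (a k L c m : R) :
  0 <= k -> k <= L -> L <= a -> 0 <= c ->
  L ^ 2 <= k ^ 2 + a ^ 2 * c -> k ^ 2 + a ^ 2 * c <= a ^ 2 ->
  m = a ^ 2 + k ^ 2 - a ^ 2 * c ->
  IsMinOn (fun s => a ^ 2 + s ^ 2 - 2 * a * sqrt (c * (s ^ 2 - k ^ 2))) L a m.
Proof.
  intros Hk HkL HLa Hc H1 H2 Hm. subst m.
  assert (Ha : 0 <= a) by lra.
  set (r := sqrt c).
  assert (Hr : 0 <= r) by apply sqrt_pos.
  assert (Hr2 : r * r = c) by (apply sqrt_sqrt; lra).
  split.
  - exists (sqrt (k ^ 2 + a ^ 2 * c)).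
    assert (H0 : 0 <= k ^ 2 + a ^ 2 * c) by nra.
    assert (Hs2 : sqrt (k ^ 2 + a ^ 2 * c) * sqrt (k ^ 2 + a ^ 2 * c) = k ^ 2 + a ^ 2 * c)
      by (apply sqrt_sqrt; lra).
    assert (Hs0 : 0 <= sqrt (k ^ 2 + a ^ 2 * c)) by apply sqrt_pos.
    split; [split|].
    + assert (0 <= L) by lra.
      destruct (Rle_lt_dec L (sqrt (k ^ 2 + a ^ 2 * c))); [lra|]. nra.
    + destruct (Rle_lt_dec (sqrt (k ^ 2 + a ^ 2 * c)) a); [lra|]. nra.
    + assert (E : c * (sqrt (k ^ 2 + a ^ 2 * c) ^ 2 - k ^ 2) = (a * c) ^ 2)
        by (replace (sqrt (k ^ 2 + a ^ 2 * c) ^ 2) with (sqrt (k ^ 2 + a ^ 2 * c) * sqrt (k ^ 2 + a ^ 2 * c)) by ring; rewrite Hs2; ring).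
      cbv beta. rewrite E, sqrt_pow2 by nra. replace (sqrt (k ^ 2 + a ^ 2 * c) ^ 2) with (sqrt (k ^ 2 + a ^ 2 * c) * sqrt (k ^ 2 + a ^ 2 * c)) by ring. rewrite Hs2. ring.
  - intros s [Hs1 Hs2].
    assert (Hd : 0 <= s ^ 2 - k ^ 2) by nra.
    rewrite sqrt_mult_alt by lra. fold r.
    set (v := sqrt (s ^ 2 - k ^ 2)).
    assert (Hv : v * v = s ^ 2 - k ^ 2) by (apply sqrt_sqrt; lra).
    assert (Hsq : 0 <= (v - a * r) * (v - a * r)) by apply Rle_0_sqr.
    rewrite <- Hr2. cbv beta. nra.
Qed.

Lemma coreB (a k L c m : R) :
  0 <= k -> k <= L -> L <= a -> 0 <= c ->
  k ^ 2 + a ^ 2 * c <= L ^ 2 ->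
  m = a ^ 2 + L ^ 2 - 2 * a * sqrt (c * (L ^ 2 - k ^ 2)) ->
  IsMinOn (fun s => a ^ 2 + s ^ 2 - 2 * a * sqrt (c * (s ^ 2 - k ^ 2))) L a m.
Proof.
  intros Hk HkL HLa Hc H1 Hm. subst m.
  assert (Ha : 0 <= a) by lra.
  split.
  - exists L. split; [lra|reflexivity].
  - intros s [Hs1 Hs2].
    assert (Hd : 0 <= s ^ 2 - k ^ 2) by nra.
    assert (HdL : 0 <= L ^ 2 - k ^ 2) by nra.
    rewrite !sqrt_mult_alt by lra.
    set (r := sqrt c).
    assert (Hr : 0 <= r) by apply sqrt_pos.
    assert (Hr2 : r * r = c) by (apply sqrt_sqrt; lra).
    set (v := sqrt (s ^ 2 - k ^ 2)).
    assert (Hv : v * v = s ^ 2 - k ^ 2) by (apply sqrt_sqrt; lra).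
    set (w := sqrt (L ^ 2 - k ^ 2)).
    assert (Hw : w * w = L ^ 2 - k ^ 2) by (apply sqrt_sqrt; lra).
    assert (Hv0 : 0 <= v) by apply sqrt_pos.
    assert (Hw0 : 0 <= w) by apply sqrt_pos.
    assert (Hwv : w <= v) by (apply sqrt_le_1_alt; nra).
    assert (Har : a * r <= w).
    { destruct (Rle_lt_dec (a * r) w); [lra|]. nra. }
    nra.
Qed.

Lemma sq_le (u w : R) : 0 <= w -> u ^ 2 <= w ^ 2 -> u <= w.
Proof. intros Hw H. destruct (Rle_lt_dec u w); [lra|]. nra. Qed.

Theorem mainTheorem8 (muX sX Rc P : R) (hsX : 0 < sX) (hRc : 0 <= Rc) (hP : 0 <= P) :
  DlowEq muX sX 0 Rc P (sX ^ 2 + (pos_part (sX - sqrt P)) ^ 2) /\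
  (forall Rr : R, 0 < Rr ->
     let t := sqrt P / sX in
     let e := exp (- (Rr + Rc)) in
     let g := 1 - sqrt (1 - exp (-2 * Rr)) in
     (Rmax g e <= t ->
        DlowEq muX sX Rr Rc P (sX ^ 2 * exp (-2 * Rr))) /\
     (e <= t < g ->
        DlowEq muX sX Rr Rc P
          (sX ^ 2 + (sX - sqrt P) ^ 2
           - 2 * sX * (sX - sqrt P) * sqrt (1 - exp (-2 * Rr)))) /\
     (nu Rr Rc <= t < e ->
        DlowEq muX sX Rr Rc P
          (sX ^ 2 * exp (-2 * Rr) + (sX * e - sqrt P) ^ 2)) /\
     (t < Rmin (nu Rr Rc) e ->
        DlowEq muX sX Rr Rc P
          (sX ^ 2 + (sX - sqrt P) ^ 2
           - 2 * sX ^ 2 * sqrt (1 - exp (-2 * Rr))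
             * sqrt ((1 - e) * (1 + e - 2 * sqrt P / sX)))) /\
     ~ (e < g /\ nu Rr Rc < e)).
Proof.
  assert (Hy0 : 0 < exp (- Rc)) by apply exp_pos.
  assert (Hy1 : exp (- Rc) <= 1).
  { destruct (Req_dec Rc 0) as [->|HRc].
    - rewrite Ropp_0, exp_0; lra.
    - rewrite <- exp_0. left; apply exp_increasing; lra. }
  assert (Hp0 : 0 <= sqrt P) by apply sqrt_pos.
  split.
  - unfold DlowEq, Dobj, Dlo, Dhi.
    rewrite Rplus_0_l.
    assert (Hk0 : 0 <= pos_part (sX * exp (- Rc) - sqrt P)) by apply Rmax_r.
    assert (HkL : pos_part (sX * exp (- Rc) - sqrt P) <= pos_part (sX - sqrt P)).
    { unfold pos_part. apply Rmax_lub; [|apply Rmax_r]. eapply Rle_trans; [|apply Rmax_l]. nra. }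
    replace (-2 * 0) with 0 by ring. rewrite exp_0, Rminus_diag.
    apply coreB.
    + exact Hk0.
    + exact HkL.
    + unfold pos_part. apply Rmax_lub; lra.
    + lra.
    + rewrite Rmult_0_r, Rplus_0_r. nra.
    + rewrite Rmult_0_l, sqrt_0. ring.
  - intros Rr HR t e g.
    set (y := exp (- Rc)) in *.
    set (x := exp (- Rr)).
    assert (Hx0 : 0 < x) by apply exp_pos.
    assert (Hx1 : x < 1) by (unfold x; rewrite <- exp_0; apply exp_increasing; lra).
    assert (Hx2 : exp (-2 * Rr) = x ^ 2)
      by (unfold x; replace (-2 * Rr) with (- Rr + - Rr) by ring; rewrite exp_plus; ring).
    assert (HE : exp (- (Rr + Rc)) = x * y)
      by (unfold x, y; rewrite Ropp_plus_distr, exp_plus; ring).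
    assert (He : e = x * y) by exact HE.
    assert (HE2 : exp (-2 * (Rr + Rc)) = x ^ 2 * y ^ 2).
    { replace (-2 * (Rr + Rc)) with (- (Rr + Rc) + - (Rr + Rc)) by ring.
      rewrite exp_plus, HE; ring. }
    assert (Hxy : x * y < 1) by nra.
    assert (Hnu : nu Rr Rc * (2 - 2 * (x * y)) = x ^ 2 - x ^ 2 * y ^ 2).
    { unfold nu. rewrite Hx2, HE2, HE. field. lra. }
    set (r := sqrt (1 - x ^ 2)).
    assert (Hr0 : 0 <= r) by apply sqrt_pos.
    assert (Hr2 : r * r = 1 - x ^ 2) by (apply sqrt_sqrt; nra).
    assert (Hg : g = 1 - r) by (unfold g; rewrite Hx2; reflexivity).
    assert (Ht : sqrt P = t * sX) by (unfold t; field; lra).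
    assert (Ht0 : 0 <= t) by nra.
    set (N := nu Rr Rc) in *.
    clearbody t e g N.
    subst e g.
    unfold DlowEq, Dobj, Dlo, Dhi, pos_part.
    rewrite HE, Hx2, Ht. fold r.
    assert (HkL : Rmax (sX * (x * y) - t * sX) 0 <= Rmax (sX - t * sX) 0).
    { apply Rmax_lub; [|apply Rmax_r]. eapply Rle_trans; [|apply Rmax_l]. nra. }
    assert (HLa : Rmax (sX - t * sX) 0 <= sX) by (apply Rmax_lub; nra).
    assert (Hk0 : 0 <= Rmax (sX * (x * y) - t * sX) 0) by apply Rmax_r.
    assert (Hc : 0 <= 1 - x ^ 2) by nra.
    split; [|split; [|split; [|split]]].
    + intros H.
      assert (H1 : 1 - r <= t) by (eapply Rle_trans; [apply Rmax_l|exact H]).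
      assert (H2 : x * y <= t) by (eapply Rle_trans; [apply Rmax_r|exact H]).
      rewrite (Rmax_right (sX * (x * y) - t * sX) 0) in * by nra.
      apply coreA; try assumption.
      * destruct (Rle_lt_dec t 1).
        -- rewrite Rmax_left by nra.
           assert (Ha : (1 - t) * (1 - t) <= r * r) by nra.
           assert (Hb : sX ^ 2 * ((1 - t) * (1 - t)) <= sX ^ 2 * (r * r)) by (apply Rmult_le_compat_l; nra).
           rewrite Hr2 in Hb. nra.
        -- rewrite Rmax_right by nra. nra.
      * nra.
      * ring.
    + intros [H1 H2].
      rewrite (Rmax_right (sX * (x * y) - t * sX) 0) in * by nra.
      rewrite (Rmax_left (sX - t * sX) 0) in * by nra.
      apply coreB; try assumption.
      * assert (Ha : r * r <= (1 - t) * (1 - t)) by nra.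
        assert (Hb : sX ^ 2 * (r * r) <= sX ^ 2 * ((1 - t) * (1 - t))) by (apply Rmult_le_compat_l; nra).
        rewrite Hr2 in Hb. nra.
      * replace ((1 - x ^ 2) * ((sX - t * sX) ^ 2 - 0 ^ 2)) with ((sX - t * sX) ^ 2 * (1 - x ^ 2)) by ring.
        rewrite sqrt_mult_alt, sqrt_pow2 by nra. fold r. ring.
    + intros [H1 H2].
      rewrite (Rmax_left (sX * (x * y) - t * sX) 0) in * by nra.
      rewrite (Rmax_left (sX - t * sX) 0) in * by nra.
      assert (HA : N * (2 - 2 * (x * y)) <= t * (2 - 2 * (x * y))) by (apply Rmult_le_compat_r; lra).
      apply coreA; try assumption.
      * assert (Q : (1 - t) * (1 - t) <= (x * y - t) * (x * y - t) + (1 - x ^ 2)) by nra.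
        assert (Hb := Rmult_le_compat_l (sX ^ 2) _ _ (pow2_ge_0 sX) Q). nra.
      * assert (Hxyx : x * y <= x) by nra.
        assert (Q : (x * y - t) * (x * y - t) <= x * x) by (apply Rmult_le_compat; lra).
        assert (Hb := Rmult_le_compat_l (sX ^ 2) _ _ (pow2_ge_0 sX) Q). nra.
      * ring.
    + intros H.
      assert (H1 : t < N) by (eapply Rlt_le_trans; [exact H|apply Rmin_l]).
      assert (H2 : t < x * y) by (eapply Rlt_le_trans; [exact H|apply Rmin_r]).
      rewrite (Rmax_left (sX * (x * y) - t * sX) 0) in * by nra.
      rewrite (Rmax_left (sX - t * sX) 0) in * by nra.
      assert (HA : t * (2 - 2 * (x * y)) <= N * (2 - 2 * (x * y))) by (apply Rmult_le_compat_r; lra).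
      apply coreB; try assumption.
      * assert (Q : (x * y - t) * (x * y - t) + (1 - x ^ 2) <= (1 - t) * (1 - t)) by nra.
        assert (Hb := Rmult_le_compat_l (sX ^ 2) _ _ (pow2_ge_0 sX) Q). nra.
      * replace ((1 - x ^ 2) * ((sX - t * sX) ^ 2 - (sX * (x * y) - t * sX) ^ 2))
          with ((sX * r) ^ 2 * ((1 - x * y) * (1 + x * y - 2 * (t * sX) / sX))).
        2:{ replace (2 * (t * sX) / sX) with (2 * t) by (field; lra).
            replace ((sX * r) ^ 2) with (sX ^ 2 * (r * r)) by ring. rewrite Hr2. ring. }
        rewrite (sqrt_mult_alt ((sX * r) ^ 2)) by apply pow2_ge_0.
        rewrite sqrt_pow2 by nra. ring.
    + intros [H1 H2].
      nra.
Qed.
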